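(* Assume every $\nabla f_j$ and $\nabla g_i$ is Lipschitz continuous on $\mathbb{R}^n$ with Lipschitz constant $L$. Consider iteration $k$ of the SQP algorithm, and suppose the solution $(t^k,d^k)$ of $QP(x^k)$ satisfies $d^k\neq 0$ and $\sigma_{k+1}$ has been computed by Step 3. Then there exists $\bar\alpha>0$ such that for every $\alpha\in(0,\bar\alpha]$, $\Psi_{j,\sigma_{k+1}}(x^k+\alpha d^k)-\Psi_{j,\sigma_{k+1}}(x^k)\le \alpha\beta\,\theta_{j,\sigma_{k+1}}(x^k;d^k)$ for all $j=1,\dots,m$.
   Context: $f_j,g_i:\mathbb{R}^n\to\mathbb{R}$ ($j=1,\dots,m$, $i=1,\dots,p$) are continuously differentiable. $\Phi(x)=\max\{0,g_1(x),\dots,g_p(x)\}$; $I(x)=\{i: g_i(x)=\Phi(x)\}$; $\Phi^*(x;d)=\max\{\max_{i\in I(x)}(g_i(x)+\nabla g_i(x)^Td),0\}-\Phi(x)$; $\Psi_{j,\sigma}(x)=f_j(x)+\sigma\Phi(x)$; $\theta_{j,\sigma}(x;d)=\nabla f_j(x)^Td+\sigma\Phi^*(x;d)$. $QP(x)$: minimize $t+\frac12 d^Td$ over $(t,d)\in\mathbb{R}\times\mathbb{R}^n$ subject to $\nabla f_j(x)^Td\le t$ for all $j$ and $g_i(x)+\nabla g_i(x)^Td\le t$ for all $i$ (unique solution). SQP algorithm: choose $x^0\in\mathbb{R}^n$, $r\in(0,1)$, $\beta\in(0,1)$, $\sigma_0>0$; set $k=0$. Step 2: let $(t^k,d^k)$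 solve $QP(x^k)$; stop if $d^k=0$. Step 3: if $\Phi(x^k)=0$ or $\theta_{j,\sigma_k}(x^k;d^k)\le-\frac12 (d^k)^Td^k$ for all $j$, set $\sigma_{k+1}=\sigma_k$; otherwise set $\sigma_{k+1}=\max\{2\sigma_k,\ (\nabla f_j(x^k)^Td^k+\frac12(d^k)^Td^k)/(-\Phi^*(x^k;d^k)),\ j=1,\dots,m\}$. Step 4: let $\alpha_k$ be the first number in $\{1,r,r^2,\dots\}$ with $\Psi_{j,\sigma_{k+1}}(x^k+\alpha_kd^k)-\Psi_{j,\sigma_{k+1}}(x^k)\le\alpha_k\beta\,\theta_{j,\sigma_{k+1}}(x^k;d^k)$ for all $j$. Step 5: $x^{k+1}=x^k+\alpha_kd^k$, $k:=k+1$, go to Step 2. *)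

(* Defs.v *)
(* real analysis on R^n, vectors represented as nat -> R,
   only the coordinates 0..n-1 being relevant. *)
From Stdlib Require Import Reals Lra List.
Open Scope R_scope.

Definition Vec := nat -> R.

Fixpoint dot (n : nat) (u v : Vec) : R :=
  match n with
  | O => 0
  | S k => dot k u v + u k * v k
  end.

Definition vnorm (n : nat) (u : Vec) : R := sqrt (dot n u u).

Definition vadd (u v : Vec) : Vec := fun i => u i + v i.
Definition vsub (u v : Vec) : Vec := fun i => u i - v i.
Definition vscal (a : R) (u : Vec) : Vec := fun i => a * u i.

Definition HasGradient (n : nat) (F : Vec -> R) (G : Vec -> Vec) : Prop :=
  forall x : Vec, forall eps : R, 0 < eps ->
    exists delta : R, 0 < delta /\
      forall h : Vec, vnorm n h < delta ->
        Rabs (F (vadd x h) - F x - dot n (G x) h) <= eps * vnorm n h.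

Definition VContinuous (n : nat) (G : Vec -> Vec) : Prop :=
  forall x : Vec, forall eps : R, 0 < eps ->
    exists delta : R, 0 < delta /\
      forall y : Vec, vnorm n (vsub y x) < delta ->
        vnorm n (vsub (G y) (G x)) < eps.

Definition LipschitzWith (n : nat) (L : R) (G : Vec -> Vec) : Prop :=
  forall x y : Vec, vnorm n (vsub (G x) (G y)) <= L * vnorm n (vsub x y).

Fixpoint maxfold (p : nat) (P : nat -> Prop) (Pdec : forall i, {P i} + {~ P i})
    (a : nat -> R) (a0 : R) : R :=
  match p with
  | O => a0
  | S k => let r := maxfold k P Pdec a a0 in
           if Pdec k then Rmax r (a k) else r
  end.

Definition always_dec (i : nat) : {True} + {~ True} := left I.

(* Phi(x) = max{0, g_1(x), ..., g_p(x)}  (indices 0..p-1) *)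
Definition Phi (p : nat) (g : nat -> Vec -> R) (x : Vec) : R :=
  maxfold p (fun _ => True) always_dec (fun i => g i x) 0.

Definition activeI (p : nat) (g : nat -> Vec -> R) (x : Vec) (i : nat) : Prop :=
  g i x = Phi p g x.

Definition activeI_dec (p : nat) (g : nat -> Vec -> R) (x : Vec) (i : nat) :
  {activeI p g x i} + {~ activeI p g x i} := Req_dec_T _ _.

(* Phi*(x;d) = max{ max_{i in I(x)} (g_i(x) + grad g_i(x)^T d), 0 } - Phi(x).
   The inner max over a possibly empty I(x) is absorbed by the outer max with 0. *)
Definition PhiStar (n p : nat) (g : nat -> Vec -> R) (gg : nat -> Vec -> Vec)
    (x d : Vec) : R :=
  maxfold p (activeI p g x) (activeI_dec p g x)
    (fun i => g i x + dot n (gg i x) d) 0 - Phi p g x.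

Definition Psi (p : nat) (f g : nat -> Vec -> R) (sigma : R) (j : nat) (x : Vec) : R :=
  f j x + sigma * Phi p g x.

Definition theta (n p : nat) (g : nat -> Vec -> R) (gf gg : nat -> Vec -> Vec)
    (sigma : R) (j : nat) (x d : Vec) : R :=
  dot n (gf j x) d + sigma * PhiStar n p g gg x d.

Definition QPfeasible (n m p : nat) (g : nat -> Vec -> R) (gf gg : nat -> Vec -> Vec)
    (x : Vec) (t : R) (d : Vec) : Prop :=
  (forall j, (j < m)%nat -> dot n (gf j x) d <= t) /\
  (forall i, (i < p)%nat -> g i x + dot n (gg i x) d <= t).

Definition QPsolution (n m p : nat) (g : nat -> Vec -> R) (gf gg : nat -> Vec -> Vec)
    (x : Vec) (t : R) (d : Vec) : Prop :=
  QPfeasible n m p g gf gg x t d /\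
  forall (t' : R) (d' : Vec), QPfeasible n m p g gf gg x t' d' ->
    t + / 2 * dot n d d <= t' + / 2 * dot n d' d'.

Definition Step3 (n m p : nat) (g : nat -> Vec -> R) (gf gg : nat -> Vec -> Vec)
    (x d : Vec) (sigma sigma' : R) : Prop :=
  let cond := Phi p g x = 0 \/
              (forall j, (j < m)%nat -> theta n p g gf gg sigma j x d <= - (/ 2 * dot n d d)) in
  (cond -> sigma' = sigma) /\
  (~ cond -> sigma' =
     maxfold m (fun _ => True) always_dec
       (fun j => (dot n (gf j x) d + / 2 * dot n d d) / (- PhiStar n p g gg x d))
       (2 * sigma)).

(* Main.v *)
Require Import Defs.
From Stdlib Require Import Reals Lra Lia Classical.
Open Scope R_scope.

Lemma dot_scal_r n u v a : dot n u (vscal a v) = a * dot n u v.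
Proof. induction n; simpl; [ring|]. rewrite IHn. unfold vscal. ring. Qed.

Lemma dot_scal_l n u v a : dot n (vscal a u) v = a * dot n u v.
Proof. induction n; simpl; [ring|]. rewrite IHn. unfold vscal. ring. Qed.

Lemma dot_zero_r n u : dot n u (fun _ => 0) = 0.
Proof. induction n; simpl; [ring|]. rewrite IHn. ring. Qed.

Lemma dot_nonneg n u : 0 <= dot n u u.
Proof. induction n; simpl; [lra|]. nra. Qed.

Lemma dot_pos n u : (exists i, (i < n)%nat /\ u i <> 0) -> 0 < dot n u u.
Proof.
  induction n; intros [i [Hi Hu]]; [lia|]. simpl.
  destruct (Nat.eq_dec i n) as [->|Hne].
  - pose proof (dot_nonneg n u). assert (0 < u n * u n) by nra. lra.
  - assert (0 < dot n u u) by (apply IHn; exists i; split; [lia|auto]). nra.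
Qed.

Lemma vnorm_scal n u a : 0 <= a -> vnorm n (vscal a u) = a * vnorm n u.
Proof.
  intros Ha. unfold vnorm. rewrite dot_scal_l, dot_scal_r.
  rewrite <- Rmult_assoc. rewrite sqrt_mult_alt by nra.
  rewrite sqrt_square by lra. reflexivity.
Qed.

Section MF.
Variables (P : nat -> Prop) (Pdec : forall i, {P i} + {~ P i}) (a : nat -> R) (a0 : R).

Lemma mf_ge0 k : a0 <= maxfold k P Pdec a a0.
Proof. induction k; simpl; [lra|]. destruct (Pdec k); [|lra].
  eapply Rle_trans; [apply IHk|apply Rmax_l]. Qed.

Lemma mf_ge k i : (i < k)%nat -> P i -> a i <= maxfold k P Pdec a a0.
Proof.
  induction k; intros Hi HP; [lia|]. simpl.
  destruct (Nat.eq_dec i k) as [->|Hne].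
  - destruct (Pdec k); [apply Rmax_r|contradiction].
  - assert (a i <= maxfold k P Pdec a a0) by (apply IHk; auto; lia).
    destruct (Pdec k); [|lra]. eapply Rle_trans; [eassumption|apply Rmax_l].
Qed.

Lemma mf_le k B : a0 <= B -> (forall i, (i < k)%nat -> P i -> a i <= B) ->
  maxfold k P Pdec a a0 <= B.
Proof.
  intros H0 H. induction k; simpl; [lra|].
  destruct (Pdec k).
  - apply Rmax_lub; [apply IHk; intros; apply H; auto; lia|apply H; auto].
  - apply IHk; intros; apply H; auto; lia.
Qed.
End MF.

Lemma unif (k : nat) (P : nat -> R -> Prop) :
  (forall i, (i < k)%nat -> exists d, 0 < d /\ forall al, 0 < al <= d -> P i al) ->
  exists d, 0 < d /\ forall i, (i < k)%nat -> forall al, 0 < al <= d -> P i al.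
Proof.
  induction k; intros H.
  - exists 1. split; [lra|]. intros; lia.
  - destruct IHk as [d1 [Hd1 H1]]. { intros; apply H; lia. }
    destruct (H k) as [d2 [Hd2 H2]]. lia.
    exists (Rmin d1 d2). split. apply Rmin_glb_lt; auto.
    intros i Hi al Hal. pose proof (Rmin_l d1 d2). pose proof (Rmin_r d1 d2).
    destruct (Nat.eq_dec i k) as [->|Hne].
    + apply H2; lra.
    + apply H1; [lia|lra].
Qed.

Lemma grad_step n F G x d eps : HasGradient n F G -> 0 < eps -> 0 < vnorm n d ->
  exists del, 0 < del /\ forall al, 0 < al <= del ->
    F (vadd x (vscal al d)) - F x <= al * dot n (G x) d + al * eps * vnorm n d.
Proof.
  intros HG He HN. destruct (HG x eps He) as [del [Hdel Hh]].
  exists (del / (2 * vnorm n d)). split.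
  { apply Rdiv_lt_0_compat; lra. }
  intros al Hal. specialize (Hh (vscal al d)).
  rewrite vnorm_scal in Hh by lra. rewrite dot_scal_r in Hh.
  assert (al * vnorm n d <= del / 2).
  { destruct Hal as [_ Hal]. apply Rmult_le_compat_r with (r := vnorm n d) in Hal; [|lra].
    replace (del / (2 * vnorm n d) * vnorm n d) with (del/2) in Hal by (field; lra). lra. }
  assert (Hb := Hh ltac:(lra)).
  pose proof (Rle_abs (F (vadd x (vscal al d)) - F x - al * dot n (G x) d)). nra.
Qed.

Theorem mainTheorem3
  (n m p : nat)
  (f : nat -> Vec -> R) (g : nat -> Vec -> R)
  (gf : nat -> Vec -> Vec) (gg : nat -> Vec -> Vec)
  (Hf : forall j, (j < m)%nat -> HasGradient n (f j) (gf j) /\ VContinuous n (gf j))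
  (Hg : forall i, (i < p)%nat -> HasGradient n (g i) (gg i) /\ VContinuous n (gg i))
  (L : R)
  (HLf : forall j, (j < m)%nat -> LipschitzWith n L (gf j))
  (HLg : forall i, (i < p)%nat -> LipschitzWith n L (gg i))
  (beta : R) (Hbeta : 0 < beta < 1)
  (xk : Vec) (sigmak : R) (Hsigmak : 0 < sigmak)
  (tk : R) (dk : Vec)
  (HQP : QPsolution n m p g gf gg xk tk dk)
  (Hd : exists i, (i < n)%nat /\ dk i <> 0)
  (sigmak1 : R)
  (Hstep3 : Step3 n m p g gf gg xk dk sigmak sigmak1) :
  exists abar : R, 0 < abar /\
    forall alpha : R, 0 < alpha <= abar ->
      forall j, (j < m)%nat ->
        Psi p f g sigmak1 j (vadd xk (vscal alpha dk)) - Psi p f g sigmak1 j xk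
          <= alpha * beta * theta n p g gf gg sigmak1 j xk dk.
Proof.
  pose proof (dot_pos n dk Hd) as HD.
  assert (HN : 0 < vnorm n dk) by (unfold vnorm; apply sqrt_lt_R0; auto).
  assert (HPh0 : 0 <= Phi p g xk) by apply mf_ge0.
  assert (HgPh : forall i, (i < p)%nat -> g i xk <= Phi p g xk).
  { intros i Hi. unfold Phi. apply (mf_ge (fun _ => True) always_dec (fun i => g i xk)); auto. }
  destruct HQP as [[Hfe1 Hfe2] Hmin].
  assert (Ht : tk <= Phi p g xk - / 2 * dot n dk dk).
  { specialize (Hmin (Phi p g xk) (fun _ => 0)).
    rewrite dot_zero_r in Hmin.
    assert (tk + / 2 * dot n dk dk <= Phi p g xk + / 2 * 0); [|lra].
    apply Hmin. split; intros; rewrite dot_zero_r; [lra|]. specialize (HgPh i H). lra. }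
  assert (HPs : PhiStar n p g gg xk dk =
    maxfold p (activeI p g xk) (activeI_dec p g xk) (fun i => g i xk + dot n (gg i xk) dk) 0
      - Phi p g xk) by reflexivity.
  assert (HM0 : 0 <= maxfold p (activeI p g xk) (activeI_dec p g xk)
                     (fun i => g i xk + dot n (gg i xk) dk) 0) by apply mf_ge0.
  assert (HMle : maxfold p (activeI p g xk) (activeI_dec p g xk)
                     (fun i => g i xk + dot n (gg i xk) dk) 0 <= Rmax 0 (Phi p g xk - / 2 * dot n dk dk)).
  { apply mf_le. apply Rmax_l. intros i Hi _. eapply Rle_trans; [|apply Rmax_r].
    specialize (Hfe2 i Hi). lra. }
  assert (HMle2 : Rmax 0 (Phi p g xk - / 2 * dot n dk dk) <= Phi p g xk).
  { apply Rmax_lub; lra. }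
  assert (Hsig : 0 < sigmak1 /\ forall j, (j < m)%nat ->
            theta n p g gf gg sigmak1 j xk dk <= - (/ 2 * dot n dk dk)).
  { unfold Step3 in Hstep3; cbv zeta in Hstep3. destruct Hstep3 as [H1 H2].
    destruct (classic (Phi p g xk = 0 \/ (forall j, (j < m)%nat ->
        theta n p g gf gg sigmak j xk dk <= - (/ 2 * dot n dk dk)))) as [Hc|Hc].
    - rewrite (H1 Hc). split; [lra|]. destruct Hc as [H0|Hth]; [|exact Hth].
      intros j Hj. unfold theta. specialize (Hfe1 j Hj).
      assert (sigmak * PhiStar n p g gg xk dk <= 0).
      { rewrite HPs. assert (0 < sigmak) by lra. nra. }
      lra.
    - rewrite (H2 Hc).
      assert (HP : 0 < Phi p g xk).
      { destruct HPh0 as [?|H0]; auto. exfalso; apply Hc; left; auto. }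
      assert (HPs0 : PhiStar n p g gg xk dk < 0).
      { rewrite HPs. assert (Rmax 0 (Phi p g xk - / 2 * dot n dk dk) < Phi p g xk).
        { apply Rmax_lub_lt; lra. } lra. }
      set (S := maxfold m (fun _ => True) always_dec
         (fun j => (dot n (gf j xk) dk + / 2 * dot n dk dk) / (- PhiStar n p g gg xk dk))
         (2 * sigmak)).
      assert (2 * sigmak <= S) by apply mf_ge0.
      split; [lra|]. intros j Hj.
      assert (Hr : (dot n (gf j xk) dk + / 2 * dot n dk dk) / (- PhiStar n p g gg xk dk) <= S).
      { apply (mf_ge (fun _ => True) always_dec
          (fun j => (dot n (gf j xk) dk + / 2 * dot n dk dk) / (- PhiStar n p g gg xk dk))); auto. }
      apply Rmult_le_compat_r with (r := - PhiStar n p g gg xk dk) in Hr; [|lra].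
      replace ((dot n (gf j xk) dk + / 2 * dot n dk dk) / (- PhiStar n p g gg xk dk) *
                 - PhiStar n p g gg xk dk) with (dot n (gf j xk) dk + / 2 * dot n dk dk) in Hr
        by (field; lra).
      unfold theta. lra. }
  destruct Hsig as [Hs1 Hth].
  set (eps := (1 - beta) * dot n dk dk / (2 * vnorm n dk * (1 + sigmak1))).
  assert (Heps : 0 < eps).
  { unfold eps. apply Rdiv_lt_0_compat; [nra|]. nra. }
  assert (Hepsv : eps * vnorm n dk * (1 + sigmak1) = (1 - beta) * dot n dk dk / 2).
  { unfold eps. field. split; lra. }
  set (Ph := Phi p g xk) in *.
  set (M := maxfold p (activeI p g xk) (activeI_dec p g xk)
              (fun i => g i xk + dot n (gg i xk) dk) 0) in *.
  destruct (unif m (fun j al => f j (vadd xk (vscal al dk)) - f j xk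
       <= al * dot n (gf j xk) dk + al * eps * vnorm n dk)) as [d1 [Hd1 H1]].
  { intros j Hj. apply grad_step; auto. apply Hf; auto. }
  destruct (unif p (fun i al => al <= 1 -> g i (vadd xk (vscal al dk))
       <= Ph + al * (M - Ph) + al * eps * vnorm n dk)) as [d2 [Hd2 H2]].
  { intros i Hi. destruct (grad_step n (g i) (gg i) xk dk eps) as [del [Hdel Hdg]]; auto.
    apply Hg; auto.
    destruct (activeI_dec p g xk i) as [Ha|Hna].
    - exists del. split; auto. intros al Hal _. specialize (Hdg al Hal).
      assert (g i xk + dot n (gg i xk) dk <= M).
      { unfold M. apply (mf_ge (activeI p g xk) (activeI_dec p g xk)
           (fun i => g i xk + dot n (gg i xk) dk)); auto. }
      unfold activeI in Ha. fold Ph in Ha.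
      assert (al * (g i xk + dot n (gg i xk) dk) <= al * M) by (apply Rmult_le_compat_l; lra).
      nra.
    - assert (Hgap : 0 < Ph - g i xk).
      { unfold activeI in Hna. specialize (HgPh i Hi). fold Ph in HgPh, Hna.
        destruct HgPh; [lra|contradiction]. }
      set (c := Rabs (dot n (gg i xk) dk + eps * vnorm n dk - (M - Ph)) + 1).
      assert (Hc : 0 < c) by (unfold c; pose proof (Rabs_pos (dot n (gg i xk) dk + eps * vnorm n dk - (M - Ph))); lra).
      exists (Rmin del ((Ph - g i xk) / c)). split.
      { apply Rmin_glb_lt; auto. apply Rdiv_lt_0_compat; auto. }
      intros al Hal _. pose proof (Rmin_l del ((Ph - g i xk) / c)).
      pose proof (Rmin_r del ((Ph - g i xk) / c)).
      specialize (Hdg al ltac:(lra)).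
      assert (al * c <= Ph - g i xk).
      { assert (Hq : al <= (Ph - g i xk) / c) by lra.
        apply Rmult_le_compat_r with (r := c) in Hq; [|lra].
        replace ((Ph - g i xk) / c * c) with (Ph - g i xk) in Hq by (field; lra). lra. }
      assert (dot n (gg i xk) dk + eps * vnorm n dk - (M - Ph) <= c).
      { unfold c. pose proof (Rle_abs (dot n (gg i xk) dk + eps * vnorm n dk - (M - Ph))). lra. }
      assert (al * (dot n (gg i xk) dk + eps * vnorm n dk - (M - Ph)) <= al * c)
        by (apply Rmult_le_compat_l; lra).
      assert (al * (dot n (gg i xk) dk + eps * vnorm n dk - (M - Ph)) =
              al * dot n (gg i xk) dk + al * eps * vnorm n dk - al * (M - Ph)) by ring.
      assert (0 <= al * eps * vnorm n dk) by (apply Rmult_le_pos; [apply Rmult_le_pos|]; lra). lra. }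
  exists (Rmin 1 (Rmin d1 d2)). split.
  { apply Rmin_glb_lt; [lra|apply Rmin_glb_lt; auto]. }
  intros al Hal j Hj.
  pose proof (Rmin_l 1 (Rmin d1 d2)). pose proof (Rmin_r 1 (Rmin d1 d2)).
  pose proof (Rmin_l d1 d2). pose proof (Rmin_r d1 d2).
  specialize (H1 j Hj al ltac:(lra)).
  assert (HPhi : Phi p g (vadd xk (vscal al dk)) <= Ph + al * (M - Ph) + al * eps * vnorm n dk).
  { unfold Phi. apply mf_le.
    - assert (0 <= al * eps * vnorm n dk).
      { apply Rmult_le_pos; [apply Rmult_le_pos|]; lra. }
      assert (0 <= (1 - al) * Ph) by (apply Rmult_le_pos; lra).
      assert (0 <= al * M) by (apply Rmult_le_pos; lra). nra.
    - intros i Hi _. apply H2; auto; lra. }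
  specialize (Hth j Hj). unfold Psi. fold Ph.
  unfold theta in *. rewrite HPs in *. fold M in Hth |- *.
  assert (sigmak1 * Phi p g (vadd xk (vscal al dk)) <=
          sigmak1 * (Ph + al * (M - Ph) + al * eps * vnorm n dk))
    by (apply Rmult_le_compat_l; lra).
  assert (Hk : al * eps * vnorm n dk * (1 + sigmak1) = al * ((1 - beta) * dot n dk dk / 2))
    by (rewrite <- Hepsv; ring).
  assert (al * (1 - beta) * (dot n (gf j xk) dk + sigmak1 * (M - Ph)) <=
          al * (1 - beta) * (- (/ 2 * dot n dk dk))).
  { apply Rmult_le_compat_l; [nra|lra]. }
  nra.
Qed.
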